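(* Let $(X_{1,\infty},f_{1,\infty},\mu_{1,\infty})$ and $(Y_{1,\infty},g_{1,\infty},\nu_{1,\infty})$ be metric nonautonomous dynamical systems with admissible classes $\mathcal{E}$ (for $f_{1,\infty}$) and $\mathcal{F}$ (for $g_{1,\infty}$), respectively. Let $\pi_{1,\infty}=\{\pi_n\}$ be an $\mathcal{E}$-$\mathcal{F}$-semiconjugacy from $f_{1,\infty}$ to $g_{1,\infty}$. Then $h_{\mathcal{F}}(g_{1,\infty})\le h_{\mathcal{E}}(f_{1,\infty})$.
   Context: A metric NDS consists of probability spaces $(X_n,\mathcal{A}_n,\mu_n)$ and measurable maps $f_n:X_n\to X_{n+1}$ with $f_n\mu_n=\mu_{n+1}$. Notation: $f_k^n=f_{k+n-1}\circ\cdots\circ f_k$, $f_k^0=\mathrm{id}$, $f_k^{-n}$ = preimage under $f_k^n$. $H_\mu(\mathcal{P})=-\sum_P\mu(P)\log\mu(P)$; $h(f_{1,\infty};\mathcal{P}_{1,\infty})=\limsup_n\frac1nH_{\mu_1}(\bigvee_{i=0}^{n-1}f_1^{-i}\mathcal{P}_{i+1})$ for sequences $\mathcal{P}_{1,\infty}=\{\mathcal{P}_n\}$ of finite measurable partitions of $X_n$; $h_{\mathcal{E}}(f_{1,\infty})=\sup_{\mathcal{P}_{1,\infty}\in\mathcal{E}}h(f_{1,\infty};\mathcal{P}_{1,\infty})$. Admissible class: a nonempty class $\mathcal{E}$ of such sequences satisfying (A) each member has uniformly bounded cardinalities $\#\mathcal{P}_n\le N$; (B) closed under passing to coarser sequences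 (termwise coarser); (C) closed under $\mathcal{P}_{1,\infty}\mapsto\{\bigvee_{i=0}^{m-1}f_k^{-i}\mathcal{P}_{k+i}\}_{k\ge1}$ for every $m\ge1$. An $\mathcal{E}$-$\mathcal{F}$-semiconjugacy is a sequence of measurable maps $\pi_n:X_n\to Y_n$ with $\pi_n\mu_n=\nu_n$ and $\pi_{n+1}\circ f_n=g_n\circ\pi_n$ for all $n$, such that $\{\mathcal{P}_n\}\in\mathcal{F}$ implies $\{\pi_n^{-1}(\mathcal{P}_n)\}\in\mathcal{E}$. *)

(* Defs.v *)
From HB Require Import structures.
From mathcomp Require Import all_boot all_order all_algebra.
From mathcomp Require Import all_classical all_reals all_analysis.
Unset Printing Implicit Defensive.
Import Order.TTheory GRing.Theory Num.Theory.
Local Open Scope classical_set_scope.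
Local Open Scope ring_scope.

(* Metric nonautonomous dynamical systems (NDS), indexed from 0 instead of 1. *)

Section Partitions.
Context {d : measure_display} {T : measurableType d}.

Definition is_fpart (P : set (set T)) : Prop :=
  [/\ finite_set P,
      (forall A, P A -> measurable A /\ A !=set0),
      (forall A B, P A -> P B -> A `&` B !=set0 -> A = B) &
      (forall x, exists A, P A /\ A x)].

Definition card_le (P : set (set T)) (N : nat) : Prop :=
  exists e : 'I_N -> set T, P `<=` range e.

Definition coarser (Q P : set (set T)) : Prop :=
  forall A, P A -> exists B, Q B /\ A `<=` B.

Definition pjoin (P Q : set (set T)) : set (set T) :=
  [set C | exists A B, [/\ P A, Q B, C = A `&` B & C !=set0]].

Definition ptriv : set (set T) := [set setT].

End Partitions.

Definition ppre {d1 d2 : measure_display} {T1 : measurableType d1}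
  {T2 : measurableType d2} (g : T1 -> T2) (P : set (set T2)) : set (set T1) :=
  [set C | exists A, [/\ P A, C = g @^-1` A & C !=set0]].

Definition pentropy {R : realType} {d : measure_display} {T : measurableType d}
  (mu : probability T R) (P : set (set T)) : R :=
  - (\sum_(A \in P) fine (mu A) * ln (fine (mu A)))%R.

Definition pseq {dX : nat -> measure_display} (X : forall n, measurableType (dX n)) :=
  forall n, set (set (X n)).

Section NDS.
Context {dX : nat -> measure_display} {X : forall n, measurableType (dX n)}.
Variable (f : forall n, X n -> X n.+1).

Fixpoint fiter (k n : nat) : X k -> X (n + k)%N :=
  match n return X k -> X (n + k)%N with
  | 0 => fun x => x
  | n'.+1 => fun x => @f (n' + k)%N (@fiter k n' x)
  end.


Fixpoint itjoin (P : pseq X) (k m : nat) : set (set (X k)) :=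
  match m with
  | 0 => ptriv
  | m'.+1 => pjoin (itjoin P k m') (ppre (@fiter k m') (P (m' + k)%N))
  end.

Definition is_pseq (P : pseq X) : Prop := forall n, is_fpart (P n).

Definition admissible (E : set (pseq X)) : Prop :=
  [/\ E !=set0,
      (forall P, E P -> is_pseq P),
      (forall P, E P -> exists N, forall n, card_le (P n) N),
      (forall P Q, E P -> is_pseq Q -> (forall n, coarser (Q n) (P n)) -> E Q) &
      (forall P m, E P -> (1 <= m)%N -> E (fun k => itjoin P k m))].

Context {R : realType}.
Variable mu : forall n, probability (X n) R.

Definition is_mNDS : Prop :=
  forall n, measurable_fun setT (f n) /\
    (forall A, measurable A -> mu n.+1 A = mu n (f n @^-1` A)).

Definition hP (P : pseq X) : \bar R :=
  limn_esup (fun n => ((pentropy (mu 0) (itjoin P 0 n)) / n%:R)%:E).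

Definition hE (E : set (pseq X)) : \bar R := ereal_sup [set hP P | P in E].

End NDS.

Definition semiconj {R : realType}
  {dX : nat -> measure_display} {X : forall n, measurableType (dX n)}
  {dY : nat -> measure_display} {Y : forall n, measurableType (dY n)}
  (f : forall n, X n -> X n.+1) (g : forall n, Y n -> Y n.+1)
  (mu : forall n, probability (X n) R) (nu : forall n, probability (Y n) R)
  (E : set (pseq X)) (F : set (pseq Y)) (pi : forall n, X n -> Y n) : Prop :=
  [/\ (forall n, measurable_fun setT (pi n)),
      (forall n A, measurable A -> nu n A = mu n (pi n @^-1` A)),
      (forall n x, pi n.+1 (f n x) = g n (pi n x)) &
      (forall Q, F Q -> E (fun n => ppre (pi n) (Q n)))].

(* Main.v *)
Require Import Defs.
From HB Require Import structures.
From mathcomp Require Import all_boot all_order all_algebra.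
From mathcomp Require Import all_classical all_reals all_analysis.
Import Order.TTheory GRing.Theory Num.Theory.
Local Open Scope classical_set_scope.
Local Open Scope ring_scope.

Section H.
Context {d1 d2 d3 : measure_display} {T1 : measurableType d1}
  {T2 : measurableType d2} {T3 : measurableType d3}.

Lemma ppre_comp (a : T1 -> T2) (b : T2 -> T3) (P : set (set T3)) :
  ppre a (ppre b P) = ppre (b \o a) P.
Proof.
apply/funext => C; apply/propext; split.
- move=> [D [[A [PA -> _]] -> C0]]; exists A; split => //.
- move=> [A [PA -> [x Cx]]]; exists (b @^-1` A); split => //.
  + exists A; split => //; exists (a x); exact: Cx.
  + by exists x.
Qed.

Lemma ppre_join (h : T1 -> T2) (P1 P2 : set (set T2)) :
  ppre h (pjoin P1 P2) = pjoin (ppre h P1) (ppre h P2).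
Proof.
apply/funext => C; apply/propext; split.
- move=> [D [[A [B [PA PB -> _]]] -> [x [Ax Bx]]]].
  exists (h @^-1` A), (h @^-1` B); split => //.
  + by exists A; split => //; exists x.
  + by exists B; split => //; exists x.
  + by exists x.
- move=> [A' [B' [[A [PA -> _]] [B [PB -> _]] -> [x [Ax Bx]]]]].
  exists (A `&` B); split => //.
  + exists A, B; split => //; by exists (h x).
  + by exists x.
Qed.

Lemma ppre_triv (h : T1 -> T2) : [set: T1] !=set0 -> ppre h ptriv = ptriv.
Proof.
move=> [x _]; apply/funext => C; apply/propext; split.
- by move=> [A [-> -> _]].
- move=> ->; exists setT; split => //; by exists x.
Qed.

Definition good {d} {T : measurableType d} (P : set (set T)) :=
  (forall A, P A -> measurable A) /\
  (forall A B, P A -> P B -> A `&` B !=set0 -> A = B).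

Lemma good_join (P Q : set (set T1)) : good P -> good Q -> good (pjoin P Q).
Proof.
move=> [mP dP] [mQ dQ]; split.
- move=> C [A [B [PA QB -> _]]]. apply: measurableI. exact: mP. exact: mQ.
- move=> C C' [A [B [PA QB -> _]]] [A' [B' [PA' QB' -> _]]] [x [[Ax Bx] [Ax' Bx']]].
  have -> : A = A' by apply: dP => //; exists x.
  have -> : B = B' by apply: dQ => //; exists x.
  by [].
Qed.
Lemma good_pre (h : T1 -> T2) (P : set (set T2)) :
  measurable_fun setT h -> good P -> good (ppre h P).
Proof.
move=> mh [mP dP]; split.
- move=> C [A [PA -> _]]. rewrite -[h @^-1` A]setTI. apply: (mh measurableT). exact: mP.
- move=> C C' [A [PA -> _]] [A' [PA' -> _]] [x [Ax Ax']].
  have -> : A = A' by apply: dP => //; exists (h x).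
  by [].
Qed.

Lemma good_triv : good (@ptriv _ T1).
Proof. split; first by move=> A ->; exact: measurableT. by move=> A B -> ->. Qed.
Context {R : realType}.
Lemma pentropy_pre (mu : probability T1 R) (nu : probability T2 R) (h : T1 -> T2)
  (P : set (set T2)) : good P ->
  (forall A, measurable A -> nu A = mu (h @^-1` A)) ->
  pentropy mu (ppre h P) = pentropy nu P.
Proof.
move=> [mP dP] hmn; rewrite /pentropy; congr (- _).
rewrite fsbig_supp [RHS]fsbig_supp.
rewrite (reindex_fsbig (fun B => h @^-1` B)
  (P `&` (fun A => fine (nu A) * ln (fine (nu A))) @^-1` [set~ 0])).
  apply: eq_fsbigr => B; rewrite inE => -[PB _] /=. by rewrite (hmn B (mP B PB)).
have key : forall B, P B -> fine (nu B) * ln (fine (nu B)) != 0 -> h @^-1` B !=set0.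
  move=> B PB nz; apply/set0P/negP => /eqP e0; move: nz.
  by rewrite hmn ?e0 ?measure0 /= ?mul0r ?eqxx //; apply: mP.
split.
- move=> B [PB /= nz]; split => /=; last by rewrite -hmn //; apply: mP.
  exists B; split => //; apply: key => //; exact/eqP.
- move=> B B'; rewrite !inE => -[PB nz] [PB' nz'] e; apply: dP => //.
  have [x hx] := key B PB (introN eqP nz).
  exists (h x); split => //. have : (h @^-1` B') x by rewrite -e. by [].
- move=> C [[A [PA -> _]] /= nz]; exists A => //; split => //=.
  by rewrite hmn //; apply: mP.
Qed.
End H.

Lemma good_fpart {d} {T : measurableType d} (P : set (set T)) : is_fpart P -> good P.
Proof. move=> [_ m dj _]; split => //; by move=> A /m []. Qed.

Lemma prob_nonempty {R : realType} {d} {T : measurableType d} (mu : probability T R) :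
  [set: T] !=set0.
Proof.
apply/set0P/negP => /eqP e; have := probability_setT mu; rewrite e measure0.
move=> [] /eqP; by rewrite eq_sym oner_eq0.
Qed.

Section NDSl.
Context {R : realType}.
Context {dX : nat -> measure_display} {X : forall n, measurableType (dX n)}.
Context {dY : nat -> measure_display} {Y : forall n, measurableType (dY n)}.
Variables (f : forall n, X n -> X n.+1) (g : forall n, Y n -> Y n.+1).
Variable (pi : forall n, X n -> Y n).
Hypothesis comm : forall n x, pi n.+1 (f n x) = g n (pi n x).

Lemma fiter_meas (mu : forall n, probability (X n) R) : is_mNDS f mu ->
  forall k m, measurable_fun setT (fiter f k m).
Proof.
move=> hm k; elim => [|m IH] /=; first exact: measurable_id.
apply: measurableT_comp => //; exact: (hm (m + k)%N).1.
Qed.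

Lemma fiter_comm k m x : pi (m + k)%N (fiter f k m x) = fiter g k m (pi k x).
Proof. elim: m => [|m IH] //=. by rewrite comm IH. Qed.

Lemma good_itjoin (mu : forall n, probability (X n) R) (P : pseq X) :
  is_mNDS f mu -> (forall n, good (P n)) -> forall k m, good (itjoin f P k m).
Proof.
move=> hm hP k; elim => [|m IH] /=; first exact: good_triv.
apply: good_join => //; apply: good_pre; [exact: fiter_meas hm k m | exact: hP].
Qed.

Lemma itjoin_pre (Q : pseq Y) k m : [set: X k] !=set0 ->
  itjoin f (fun n => ppre (pi n) (Q n)) k m = ppre (pi k) (itjoin g Q k m).
Proof.
move=> ne; elim: m => [|m IH] /=; first by rewrite ppre_triv.
rewrite IH ppre_join ppre_comp ppre_comp; congr (pjoin _ (ppre _ _)).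
apply/funext => x /=; exact: fiter_comm.
Qed.
End NDSl.
Theorem mainTheorem3 (R : realType)
  (dX : nat -> measure_display) (X : forall n, measurableType (dX n))
  (f : forall n, X n -> X n.+1) (mu : forall n, probability (X n) R)
  (dY : nat -> measure_display) (Y : forall n, measurableType (dY n))
  (g : forall n, Y n -> Y n.+1) (nu : forall n, probability (Y n) R)
  (E : set (pseq X)) (F : set (pseq Y)) (pi : forall n, X n -> Y n) :
  is_mNDS f mu -> is_mNDS g nu ->
  admissible f E -> admissible g F ->
  semiconj f g mu nu E F pi ->
  (hE g nu F <= hE f mu E)%E.
Proof.
move=> hf hg _ [_ Fps _ _ _] [mpi pres comm Fsub].
apply: ereal_sup_le => _ [Q FQ <-].
exists (fun n => ppre (pi n) (Q n)); first exact: Fsub.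
rewrite /hP; congr (limn_esup _); apply/funext => n; congr (_%:E); congr (_ / _).
rewrite (itjoin_pre f g pi comm); last exact: (prob_nonempty (mu 0)).
rewrite (pentropy_pre (mu 0) (nu 0)) //.
- apply: (good_itjoin g nu) => // m; apply: good_fpart; exact: (Fps Q FQ m).
- move=> A mA; exact: pres.
Qed.
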